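(* Let $X$ be a locally connected compact metrizable group with an invariant metric $\delta$, let $T$ be a minimal rotation of $X$, let $G$ be a locally compact second countable group, $f\colon X\to G$ continuous, $H$ a closed subgroup of $G$, and let $y\mapsto H_y$ be a consistent selection of subgroups in the essential ranges of $f$. Let $U$ be a relatively compact open neighbourhood of $\mathbf 1_G$ such that $E_z(f)\cap(\bar U H_z\setminus UH_z)=\varnothing$ for some $z\in X$. Then there exists $\varepsilon>0$ such that for all $y\in X$ and $n\in\mathbb Z$ with $\delta(y,z)<\varepsilon$ and $\delta(T^ny,z)<\varepsilon$, either $f(n,y)H_y\cap UH_y\neq\varnothing$ or $f(n,y)H_y\cap\bar UH_y=\varnothing$. Furthermore, for every $y\in X$ and every $g\in E_y(f)$ we have $gH_y\subseteq E_y(f)$.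
   Context: The cocycle is $f(n,x)=f(T^{n-1}x)\cdots f(x)$ for $n\ge1$, $f(0,x)=\mathbf 1_G$, $f(n,x)=f(-n,T^nx)^{-1}$ for $n<0$. $E_x(f)$ is the set of $g\in G$ such that for every open neighbourhood $U$ of $g$ and every open neighbourhood $\mathcal O$ of $x$ there is $n\neq0$ with $T^{-n}\mathcal O\cap\mathcal O\cap\{y:f(n,y)\in U\}\neq\varnothing$. $H^G=\{gHg^{-1}:g\in G\}$, topologised via the bijection with $G/N(H)$, $N(H)=\{g:gHg^{-1}=H\}$. A consistent selection of subgroups in the essential ranges of $f$ is a continuous map $y\mapsto H_y$ from $X$ into $H^G$ such that $H_x\subseteq E_x(f)$ and $H_{T^nx}=f(n,x)H_xf(n,x)^{-1}$ for all $x\in X$, $n\in\mathbb Z$. *)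

(* Defs.v *)
From HB Require Import structures.
From mathcomp Require Import all_boot all_order all_algebra.
From mathcomp Require Import all_classical all_reals topology.
Set Implicit Arguments. Unset Strict Implicit. Unset Printing Implicit Defensive.
Import Order.TTheory GRing.Theory Num.Theory.
Local Open Scope classical_set_scope.
Local Open Scope ring_scope.

Record is_group (T : Type) (mul : T -> T -> T) (inv : T -> T) (one : T) : Prop := {
  grp_assoc : forall x y z, mul x (mul y z) = mul (mul x y) z;
  grp_mul1l : forall x, mul one x = x;
  grp_mul1r : forall x, mul x one = x;
  grp_mulVl : forall x, mul (inv x) x = one;
  grp_mulVr : forall x, mul x (inv x) = one }.

Record is_topgroup (T : topologicalType) (mul : T -> T -> T) (inv : T -> T) (one : T)
  : Prop := {
  tg_group : is_group mul inv one;
  tg_mul_cont : continuous (fun p : T * T => mul p.1 p.2);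
  tg_inv_cont : continuous inv }.

Definition locally_connected (T : topologicalType) : Prop :=
  forall (x : T) (V : set T), nbhs x V ->
    exists W : set T, [/\ open W, W x, connected W & W `<=` V].

Definition is_metric (R : realType) (T : Type) (d : T -> T -> R) : Prop :=
  [/\ forall x y, 0 <= d x y,
      forall x y, d x y = 0 <-> x = y,
      forall x y, d x y = d y x &
      forall x y z, d x z <= d x y + d y z].

Definition metric_compatible (R : realType) (T : topologicalType) (d : T -> T -> R)
  : Prop :=
  forall A : set T, open A <->
    (forall x, A x -> exists2 e : R, 0 < e & forall y, d x y < e -> A y).

Definition invariant_metric (R : realType) (T : Type) (mul : T -> T -> T)
  (d : T -> T -> R) : Prop :=
  forall g x y, d (mul g x) (mul g y) = d x y /\ d (mul x g) (mul y g) = d x y.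

Definition iterz (X : Type) (T Tinv : X -> X) (n : int) (x : X) : X :=
  match n with
  | Posz k => iter k T x
  | Negz k => iter k.+1 Tinv x
  end.

Definition minimal_map (X : topologicalType) (T : X -> X) : Prop :=
  forall A : set X, closed A -> A !=set0 -> (forall x, A x <-> A (T x)) -> A = setT.

Section Cocycle.
Variables (X G : Type) (mulG : G -> G -> G) (invG : G -> G) (oneG : G)
  (T Tinv : X -> X) (f : X -> G).

Fixpoint cocn (k : nat) (x : X) : G :=
  match k with
  | 0%N => oneG
  | k'.+1 => mulG (f (iter k' T x)) (cocn k' x)
  end.

(* f(n,x) for n : int; f(n,x) = f(-n, T^n x)^{-1} for n < 0 *)
Definition cocycle (n : int) (x : X) : G :=
  match n with
  | Posz k => cocn k x
  | Negz k => invG (cocn k.+1 (iterz T Tinv (Negz k) x))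
  end.

End Cocycle.

Definition ess_range (X G : topologicalType) (mulG : G -> G -> G) (invG : G -> G)
  (oneG : G) (T Tinv : X -> X) (f : X -> G) (x : X) : set G :=
  [set g | forall (V : set G) (O : set X),
     open V -> V g -> open O -> O x ->
     exists n : int, n != 0 /\
       exists y, [/\ O y, O (iterz T Tinv n y) & V (cocycle mulG invG oneG T Tinv f n y)]].

Definition setmul (G : Type) (mulG : G -> G -> G) (A B : set G) : set G :=
  [set z | exists a b, [/\ A a, B b & z = mulG a b]].

Definition conjset (G : Type) (mulG : G -> G -> G) (invG : G -> G) (g : G)
  (H : set G) : set G :=
  [set z | exists h, H h /\ z = mulG (mulG g h) (invG g)].

Definition normaliser (G : Type) (mulG : G -> G -> G) (invG : G -> G) (H : set G)
  : set G := [set k | conjset mulG invG k H = H].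

Definition closed_subgroup (G : topologicalType) (mulG : G -> G -> G) (invG : G -> G)
  (oneG : G) (H : set G) : Prop :=
  [/\ closed H, H oneG, forall x y, H x -> H y -> H (mulG x y) &
      forall x, H x -> H (invG x)].

(* A map y |-> Hs y from X into H^G = {gHg^-1}, continuous for the topology of
   H^G transported from G/N(H) (quotient topology): the preimage of every open set
   of G/N(H) is open; open sets of G/N(H) correspond to the open subsets O of G
   saturated under right multiplication by N(H). *)
Definition conj_class_map (X G : topologicalType) (mulG : G -> G -> G)
  (invG : G -> G) (H : set G) (Hs : X -> set G) : Prop :=
  (forall y, exists g, Hs y = conjset mulG invG g H) /\
  (forall O : set G, open O ->
     (forall g k, O g -> normaliser mulG invG H k -> O (mulG g k)) ->
     open [set y | exists g, O g /\ Hs y = conjset mulG invG g H]).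

Definition consistent_selection (X G : topologicalType) (mulG : G -> G -> G)
  (invG : G -> G) (oneG : G) (T Tinv : X -> X) (f : X -> G) (H : set G)
  (Hs : X -> set G) : Prop :=
  [/\ conj_class_map mulG invG H Hs,
      forall x, Hs x `<=` ess_range mulG invG oneG T Tinv f x &
      forall x (n : int), Hs (iterz T Tinv n x) =
        conjset mulG invG (cocycle mulG invG oneG T Tinv f n x) (Hs x)].

(* Main.v *)
Require Import Defs.
From HB Require Import structures.
From mathcomp Require Import all_boot all_order all_algebra.
From mathcomp Require Import all_classical all_reals topology.
From mathcomp Require Import zify.
Import Order.TTheory GRing.Theory Num.Theory.
Local Open Scope classical_set_scope.
Local Open Scope ring_scope.

Module Aux.
Set Implicit Arguments. Unset Strict Implicit.

Section Grp.
Variables (T : Type) (mul : T -> T -> T) (inv : T -> T) (one : T).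
Hypothesis hg : is_group mul inv one.

Lemma gA x y z : mul x (mul y z) = mul (mul x y) z.
Proof. by case: hg. Qed.
Lemma g1l x : mul one x = x. Proof. by case: hg. Qed.
Lemma g1r x : mul x one = x. Proof. by case: hg. Qed.
Lemma gVl x : mul (inv x) x = one. Proof. by case: hg. Qed.
Lemma gVr x : mul x (inv x) = one. Proof. by case: hg. Qed.

Lemma gK x y : mul (inv x) (mul x y) = y.
Proof. by rewrite gA gVl g1l. Qed.
Lemma gKV x y : mul x (mul (inv x) y) = y.
Proof. by rewrite gA gVr g1l. Qed.
Lemma gKr x y : mul (mul y x) (inv x) = y.
Proof. by rewrite -gA gVr g1r. Qed.
Lemma gKVr x y : mul (mul y (inv x)) x = y.
Proof. by rewrite -gA gVl g1r. Qed.

Lemma inv_uniq a b : mul a b = one -> inv a = b.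
Proof. by move=> h; rewrite -(g1r (inv a)) -h gK. Qed.
Lemma invM x y : inv (mul x y) = mul (inv y) (inv x).
Proof. apply: inv_uniq; by rewrite -gA (gA y) gVr g1l gVr. Qed.
Lemma inv1 : inv one = one.
Proof. by apply: inv_uniq; rewrite g1l. Qed.
Lemma invK x : inv (inv x) = x.
Proof. by apply: inv_uniq; rewrite gVl. Qed.

Lemma conjM a b S :
  conjset mul inv (mul a b) S = conjset mul inv a (conjset mul inv b S).
Proof.
rewrite /conjset; apply/seteqP; split=> x /=.
  case=> h [Sh ->]; exists (mul (mul b h) (inv b)); split; first by exists h.
  by rewrite invM !gA.
case=> t [[h [Sh ->]] ->]; exists h; split => //.
by rewrite invM !gA.
Qed.

Lemma conj_sub a S (hS : forall x y, S x -> S y -> S (mul x y))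
  (hSi : forall x, S x -> S (inv x)) (S1 : S one) :
  let C := conjset mul inv a S in
  [/\ C one, forall x y, C x -> C y -> C (mul x y) & forall x, C x -> C (inv x)].
Proof.
rewrite /conjset /=; split.
- by exists one; split => //; rewrite g1r gVr.
- move=> x y [h [Sh ->]] [k [Sk ->]]; exists (mul h k); split; first exact: hS.
  by rewrite -!gA gK.
- move=> x [h [Sh ->]]; exists (inv h); split; first exact: hSi.
  by rewrite !invM invK gA.
Qed.

End Grp.


Lemma int_ind2 (P : int -> Prop) : P 0 -> (forall n, P n -> P (n + 1)) ->
  (forall n, P n -> P (n - 1)) -> forall n, P n.
Proof.
move=> P0 Ps Pp; elim/int_rec => // k Hk.
  have -> : Posz k.+1 = Posz k + 1 by lia.
  exact: Ps.
have -> : - Posz k.+1 = - Posz k - 1 by lia.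
exact: Pp.
Qed.

Section Coc.
Variables (X G : Type) (mul : G -> G -> G) (inv : G -> G) (one : G)
  (T Tinv : X -> X) (f : X -> G).
Hypothesis hg : is_group mul inv one.
Hypothesis TK : cancel T Tinv.
Hypothesis TKV : cancel Tinv T.

Local Notation itz := (iterz T Tinv).
Local Notation coc := (cocycle mul inv one T Tinv f).
Local Notation cn := (cocn mul one T f).

Lemma iterzS n x : itz (n + 1) x = T (itz n x).
Proof.
case: n => [k|[|k]].
- by have -> : (Posz k + 1) = Posz k.+1 by lia.
- by have -> : (Negz 0 + 1) = 0 by lia.
- have -> : (Negz k.+1 + 1) = Negz k by lia.
  by rewrite /= TKV.
Qed.

Lemma iterzP n x : itz (n - 1) x = Tinv (itz n x).
Proof. by rewrite -{2}(subrK 1 n) iterzS TK. Qed.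

Lemma iterzD n m x : itz (n + m) x = itz n (itz m x).
Proof.
elim/int_ind2: n => [|n IH|n IH]; first by rewrite add0r.
- by rewrite (addrAC n 1 m) !iterzS IH.
- by rewrite (addrAC n (-1) m) !iterzP IH.
Qed.

Lemma cnS' k w : cn k.+1 w = mul (cn k (T w)) (f w).
Proof.
elim: k w => [|k IH] w; first by rewrite /= (g1r hg) (g1l hg).
change (mul (f (iter k.+1 T w)) (cn k.+1 w) =
  mul (mul (f (iter k T (T w))) (cn k (T w))) (f w)).
by rewrite IH (gA hg) -iterSr.
Qed.

Lemma cocS n x : coc (n + 1) x = mul (f (itz n x)) (coc n x).
Proof.
case: n => [k|[|k]].
- by have -> : (Posz k + 1) = Posz k.+1 by lia.
- have -> : (Negz 0 + 1) = 0 by lia.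
  by rewrite /= (g1r hg) (gVr hg).
- have -> : (Negz k.+1 + 1) = Negz k by lia.
  rewrite /cocycle /iterz.
  rewrite [cn k.+2 _]cnS' (invM hg) (gA hg) (gVr hg) (g1l hg).
  by rewrite iterSr /= TKV -iterSr.
Qed.

Lemma cocP n x : coc (n - 1) x = mul (inv (f (itz (n - 1) x))) (coc n x).
Proof. by rewrite -{3}(subrK 1 n) cocS (gK hg). Qed.

Lemma coc0 x : coc 0 x = one.
Proof. by []. Qed.

Lemma cocD n m x : coc (n + m) x = mul (coc n (itz m x)) (coc m x).
Proof.
elim/int_ind2: n => [|n IH|n IH]; first by rewrite add0r coc0 (g1l hg).
- by rewrite (addrAC n 1 m) !cocS IH (gA hg) iterzD.
- by rewrite (addrAC n (-1) m) !cocP IH (gA hg) -[itz (n - 1) (itz m x)]iterzD (addrAC n (-1) m).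
Qed.

End Coc.


Lemma open_loc (T : topologicalType) (A : set T) :
  (forall x, A x -> exists B, [/\ open B, B x & B `<=` A]) -> open A.
Proof.
move=> h; rewrite openE => x /h [B [oB Bx BA]].
rewrite /interior nbhsE; by exists B.
Qed.

Lemma nbhs_open (T : topologicalType) (x : T) (A : set T) :
  nbhs x A -> exists B, [/\ open B, B x & B `<=` A].
Proof. by rewrite nbhsE => -[B [oB Bx] BA]; exists B. Qed.

Lemma cont_comp (S T U : topologicalType) (p : S -> T) (q : T -> U) :
  continuous p -> continuous q -> continuous (fun x => q (p x)).
Proof.
move=> /continuousP hp /continuousP hq; apply/continuousP => A oA.
exact: (hp _ (hq _ oA)).
Qed.

Section Top.
Variables (G : topologicalType) (mul : G -> G -> G) (inv : G -> G) (one : G).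
Hypothesis htg : is_topgroup mul inv one.

Lemma box a b V : open V -> V (mul a b) ->
  exists V1 V2, [/\ open V1, V1 a, open V2, V2 b & forall x y, V1 x -> V2 y -> V (mul x y)].
Proof.
move=> oV Vab; have := tg_mul_cont htg (x:=(a, b)) (open_nbhs_nbhs (conj oV Vab)).
case=> [[A B]] /= [nA nB] sub.
have [A' [oA Aa AA]] := nbhs_open nA.
have [B' [oB Bb BB]] := nbhs_open nB.
exists A', B'; split => // x y Ax By.
by apply: (sub (x, y)); split; [apply: AA|apply: BB].
Qed.

Lemma cont_mulf (S : topologicalType) (p q : S -> G) :
  continuous p -> continuous q -> continuous (fun x => mul (p x) (q x)).
Proof.
move=> /continuousP hp /continuousP hq; apply/continuousP => V oV.
apply: open_loc => x /= Vx.
have [V1 [V2 [oV1 V1x oV2 V2x sub]]] := box oV Vx.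
exists (p @^-1` V1 `&` q @^-1` V2); split.
- exact: openI (hp _ oV1) (hq _ oV2).
- by split.
- by move=> y [h1 h2]; apply: sub.
Qed.

Lemma cont_inv : continuous inv.
Proof. exact: tg_inv_cont htg. Qed.

Lemma open_rmul W d : open W -> open [set x | W (mul x d)].
Proof.
move=> oW.
have hc : continuous (fun x => mul x d).
  apply: (cont_mulf (p:=id) (q:=fun=> d)); last exact: cst_continuous.
  by move=> x.
by move/continuousP: hc => /(_ _ oW).
Qed.

End Top.

Section CocTop.
Variables (X G : topologicalType) (mul : G -> G -> G) (inv : G -> G) (one : G)
  (T Tinv : X -> X) (f : X -> G).
Hypothesis htg : is_topgroup mul inv one.
Hypotheses (cT : continuous T) (cTi : continuous Tinv) (cf : continuous f).

Lemma cont_iter (h : X -> X) k : continuous h -> continuous (iter k h).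
Proof.
move=> ch; elim: k => [|k IH] /=; first by move=> x.
exact: (cont_comp IH ch).
Qed.

Lemma cont_iterz n : continuous (iterz T Tinv n).
Proof. by case: n => k; apply: cont_iter. Qed.

Lemma cont_cocn k : continuous (cocn mul one T f k).
Proof.
elim: k => [|k IH] /=; first exact: cst_continuous.
apply: (cont_mulf htg) => //.
exact: (cont_comp (cont_iter (k:=k) cT) cf).
Qed.

Lemma cont_coc n : continuous (cocycle mul inv one T Tinv f n).
Proof.
case: n => k /=; first exact: cont_cocn.
apply: (cont_comp _ (cont_inv htg)).
exact: (cont_comp (cont_iter (k:=k.+1) cTi) (cont_cocn (k:=k.+1))).
Qed.

End CocTop.


Lemma conj1 (G : Type) (mul : G -> G -> G) inv one (hg : is_group mul inv one) S :
  conjset mul inv one S = S.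
Proof.
rewrite /conjset; apply/seteqP; split=> x /=.
  by case=> h [Sh ->]; rewrite (inv1 hg) (g1r hg) (g1l hg).
by move=> Sx; exists x; rewrite (inv1 hg) (g1r hg) (g1l hg).
Qed.

Section Main.
Variables (X G : topologicalType) (mul : G -> G -> G) (inv : G -> G) (one : G)
  (T Tinv : X -> X) (f : X -> G) (H : set G) (Hs : X -> set G).
Hypothesis htg : is_topgroup mul inv one.
Hypotheses (cT : continuous T) (cTi : continuous Tinv) (cf : continuous f).
Hypotheses (TK : cancel T Tinv) (TKV : cancel Tinv T).
Hypothesis hH : closed_subgroup mul inv one H.
Hypothesis hsel : consistent_selection mul inv one T Tinv f H Hs.

Let hg := tg_group htg.
Local Notation itz := (iterz T Tinv).
Local Notation coc := (cocycle mul inv one T Tinv f).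
Local Notation E := (ess_range mul inv one T Tinv f).

Definition Approx (V : set G) (O : set X) :=
  exists n : int, n != 0 /\ exists y, [/\ O y, O (itz n y) & V (coc n y)].

Lemma comp_ret y n (V1 V2 V : set G) (O : set X) e :
  open V1 -> open V2 -> open O ->
  (forall a b, V1 a -> V2 b -> V (mul a b)) ->
  O y -> O (itz n y) -> V1 (coc n y) -> E y e -> V2 e ->
  Approx V O \/ V one.
Proof.
move=> oV1 oV2 oO sub Oy Ony V1c Ee V2e.
pose A := O `&` (itz n @^-1` O `&` coc n @^-1` V1).
have oA : open A.
  apply: (openI oO); apply: openI.
    by move/continuousP: (cont_iterz cT cTi (n:=n)) => /(_ _ oO).
  by move/continuousP: (cont_coc htg cT cTi cf (n:=n)) => /(_ _ oV1).
have [k [k0 [y' [[Oy' [Ony' _]] [Oky' [Onky' V1ky']] V2ky']]]] :=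
  Ee V2 A oV2 V2e oA (conj Oy (conj Ony V1c)).
have hV : V (coc (n + k) y') by rewrite (cocD f hg TK TKV); apply: sub.
have [nk0|nk0] := eqVneq (n + k) 0.
  by right; move: hV; rewrite nk0.
left; exists (n + k); split => //; exists y'; split => //.
by rewrite (iterzD TK TKV).
Qed.

Lemma Hs_grp y : [/\ Hs y one, forall a b, Hs y a -> Hs y b -> Hs y (mul a b)
  & forall a, Hs y a -> Hs y (inv a)].
Proof.
case: hsel => [[hc _] _ _]; have [g ->] := hc y.
case: hH => _ H1 HM HV.
by have [] := conj_sub hg g HM HV H1.
Qed.

Lemma E_one y : E y one.
Proof. case: hsel => _ hE _; apply: hE; by case: (Hs_grp y). Qed.

Lemma Hs_cont z (W : set G) : open W -> W one ->
  exists P : set X, [/\ open P, P z & forall y, P y -> forall h, Hs z h ->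
    exists w, W w /\ Hs y (mul (mul w h) (inv w))].
Proof.
move=> oW W1.
case: hsel => [[hc hop] _ _]; have [c Hz] := hc z.
pose N := normaliser mul inv H.
pose O' := [set g | exists w k, [/\ W w, N k & g = mul (mul w c) k]].
have oO' : open O'.
  apply: open_loc => g [w [k [Ww Nk ->]]].
  exists [set x | W (mul x (inv (mul c k)))]; split.
  - exact: (open_rmul htg).
  - by rewrite /= -(gA hg w c k) (gKr hg).
  - move=> x /= Wx; exists (mul x (inv (mul c k))), k; split => //.
    by rewrite -(gA hg _ c k) (gKVr hg).
have satO : forall g k, O' g -> N k -> O' (mul g k).
  move=> g k [w [k' [Ww Nk' ->]]] Nk; exists w, (mul k' k); split => //.
    by rewrite /N /normaliser /= (conjM hg) Nk Nk'.
  by rewrite (gA hg).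
have := hop O' oO' satO.
set P := [set y | _]; move=> oP.
exists P; split => //.
  exists c; split => //; exists one, one; split => //.
    by rewrite /N /normaliser /= (conj1 hg).
  by rewrite (g1l hg) (g1r hg).
move=> y [g [[w [k [Ww Nk ->]]] ->]] h.
rewrite Hz => -[h0 [Hh0 ->]].
have : H h0 by [].
rewrite -[H in H h0 -> _]Nk => -[x [Hx ->]].
exists w; split => //; exists x; split => //.
by rewrite !(invM hg) !(gA hg).
Qed.


Lemma cont_conj h : continuous (fun w => mul (mul w h) (inv w)).
Proof.
apply: (cont_mulf htg); last exact: cont_inv htg.
apply: (cont_mulf htg (p:=id) (q:=fun=> h)); last exact: cst_continuous.
by move=> x.
Qed.

Lemma part2 y g : E y g -> setmul mul [set g] (Hs y) `<=` E y.
Proof.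
move=> Eg x [a [h [ag Hh ->]]]; rewrite ag => {a ag}.
move=> V O oV Vx oO Oy.
have [V1 [V2 [oV1 V1g oV2 V2h sub]]] := box htg oV Vx.
pose W := [set w | V2 (mul (mul w h) (inv w))].
have oW : open W by move/continuousP: (cont_conj (h:=h)) => /(_ _ oV2).
have W1 : W one by rewrite /W /= (inv1 hg) (g1r hg) (g1l hg).
have [P [oP Py hP]] := Hs_cont y oW W1.
have [n [n0 [y1 [[Oy1 Py1] [Ony1 Pny1] V1c]]]] :=
  Eg V1 (O `&` P) oV1 V1g (openI oO oP) (conj Oy Py).
have [w [Ww Hh']] := hP y1 Py1 h Hh.
have Eh' : E y1 (mul (mul w h) (inv w)) by case: hsel => _ hE _; apply: hE.
case: (comp_ret oV1 oV2 oO sub Oy1 Ony1 V1c Eh' Ww) => [hA|V1'].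
  exact: hA.
exact: (E_one (y:=y) oV V1' oO Oy).
Qed.


Lemma eps_small (R : realType) (r : R) : 0 < r -> exists N : nat, (N.+1%:R)^-1 < r.
Proof.
move=> r0.
have r0' : 0 <= r^-1 by rewrite invr_ge0 ltW.
have hb := archi_boundP r0'.
move: (Num.Def.archi_bound _) hb => N hb; exists N.
rewrite -[r in _ < r]invrK ltf_pV2 ?posrE ?invr_gt0 ?ltr0n //.
by apply: (lt_trans hb); rewrite ltr_nat.
Qed.

Variables (R : realType) (delta : X -> X -> R) (U : set G) (z : X).
Hypotheses (hmet : is_metric delta) (hcomp : metric_compatible delta).
Hypotheses (oU : open U) (U1 : U one) (cU : compact (closure U)).
Hypothesis hz : E z `&` (setmul mul (closure U) (Hs z) `\` setmul mul U (Hs z)) = set0.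

Definition Bad (m : nat) y n u h1 h2 :=
  [/\ delta y z < (m.+1%:R)^-1, delta (itz n y) z < (m.+1%:R)^-1,
      [/\ closure U u, Hs y h1, Hs y h2 & mul (coc n y) h1 = mul u h2] &
      forall x, ~ (setmul mul [set coc n y] (Hs y) x /\ setmul mul U (Hs y) x)].

Lemma part1 : exists2 eps : R, 0 < eps &
     forall (y : X) (n : int), delta y z < eps -> delta (itz n y) z < eps ->
       setmul mul [set coc n y] (Hs y) `&` setmul mul U (Hs y) !=set0 \/
       setmul mul [set coc n y] (Hs y) `&` setmul mul (closure U) (Hs y) = set0.
Proof.
apply: contrapT => hno.
have hseq : forall m : nat, exists p : (X * int) * (G * (G * G)),
    Bad m p.1.1 p.1.2 p.2.1 p.2.2.1 p.2.2.2.
  move=> m; apply: contrapT => hm; apply: hno.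
  exists (m.+1%:R)^-1; first by rewrite invr_gt0 ltr0n.
  move=> y n d1 d2.
  case: (pselect (setmul mul [set coc n y] (Hs y) `&` setmul mul U (Hs y) !=set0)) => [h|h].
    by left.
  right; apply: contrapT => hB; apply: hm.
  have [x [[a [h1 [ae Hh1 ->]]] [u [h2 [cu Hh2 e]]]]] :
    setmul mul [set coc n y] (Hs y) `&` setmul mul (closure U) (Hs y) !=set0.
    by apply/set0P/eqP.
  exists ((y, n), (u, (h1, h2))); split => //=.
    by split => //; rewrite -ae.
  by move=> x' hx'; apply: h; exists x'.
have [F hF] := choice hseq.
pose ys m := (F m).1.1. pose ns m := (F m).1.2. pose us m := (F m).2.1.
pose h1s m := (F m).2.2.1. pose h2s m := (F m).2.2.2.
have hB : forall m, Bad m (ys m) (ns m) (us m) (h1s m) (h2s m) by move=> m; apply: hF.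
have hmO : forall O : set X, open O -> O z -> exists N, forall m, (N <= m)%N ->
    O (ys m) /\ O (itz (ns m) (ys m)).
  move=> O oO Oz.
  have [r r0 hr] := (proj1 (hcomp O) oO) z Oz.
  have [N hN] := eps_small r0.
  exists N => m Nm.
  have le : (m.+1%:R)^-1 <= (N.+1%:R)^-1 :> R.
    by rewrite lef_pV2 ?posrE ?ltr0n // ler_nat.
  case: hmet => _ _ dsym _.
  have [d1 d2 _ _] := hB m.
  split; apply: hr; rewrite dsym.
    exact: (lt_trans d1 (le_lt_trans le hN)).
  exact: (lt_trans d2 (le_lt_trans le hN)).
have Fcl : (us @ \oo) (closure U).
  by exists 0%N => // m _; have [_ _ [] ] := hB m.
have [ustar [cUs clus]] := cU _ Fcl.
have clu : forall V : set G, open V -> V ustar -> forall N, exists m, (N <= m)%N /\ V (us m).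
  move=> V oV Vs N.
  have hA : (us @ \oo) (us @` [set m | (N <= m)%N]).
    by exists N => // m /= Nm; exists m.
  have [x [[m Nm <-] Vx]] := clus _ _ hA (open_nbhs_nbhs (conj oV Vs)).
  by exists m.
have Es : E z ustar.
  move=> V O oV Vs oO Oz.
  have [N hN] := hmO O oO Oz.
  have [m [Nm Vm]] := clu V oV Vs N.
  have [Oy Ony] := hN m Nm.
  have [_ _ [_ Hh1 Hh2 eq] _] := hB m.
  set c := coc (ns m) (ys m) in eq *.
  set e := mul (h1s m) (inv (h2s m)).
  have ue : us m = mul c e.
    by rewrite /e (gA hg) eq (gKr hg).
  rewrite ue in Vm.
  have [V1 [V2 [oV1 V1c oV2 V2e sub]]] := box htg oV Vm.
  have He : Hs (ys m) e.
    by have [_ HM HV] := Hs_grp (ys m); apply: HM => //; apply: HV.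
  have Ee : E (ys m) e by case: hsel => _ hE _; apply: hE.
  case: (comp_ret oV1 oV2 oO sub Oy Ony V1c Ee V2e) => [hA|V1'].
    exact: hA.
  exact: (E_one (y:=z) oV V1' oO Oz).
have S2s : setmul mul U (Hs z) ustar.
  apply: contrapT => nS.
  have : (E z `&` (setmul mul (closure U) (Hs z) `\` setmul mul U (Hs z))) ustar.
    split => //; split => //; exists ustar, one; split => //.
      by case: (Hs_grp z).
    by rewrite (g1r hg).
  by rewrite hz.
have [v [h [Uv Hh ev]]] := S2s.
have vU : U (mul ustar (inv h)) by rewrite ev (gKr hg).
have [V1 [V2 [oV1 V1s oV2 V2h sub]]] := box htg oU vU.
pose Wb := [set w | V2 (inv (mul (mul w h) (inv w)))].
have oWb : open Wb.
  have hc := cont_comp (cont_conj (h:=h)) (cont_inv htg).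
  by move/continuousP: hc => /(_ _ oV2).
have Wb1 : Wb one by rewrite /Wb /= (inv1 hg) (g1r hg) (g1l hg).
have [P [oP Pz hP]] := Hs_cont z oWb Wb1.
have [N hN] := hmO P oP Pz.
have [m [Nm V1m]] := clu V1 oV1 V1s N.
have [Pym _] := hN m Nm.
have [w [Ww Hhh]] := hP (ys m) Pym h Hh.
set hh := mul (mul w h) (inv w) in Ww Hhh.
have Uv' : U (mul (us m) (inv hh)) by apply: sub.
have [_ _ [_ Hh1 Hh2 eq] nb] := hB m.
apply: (nb (mul (coc (ns m) (ys m)) (h1s m))); split.
  by exists (coc (ns m) (ys m)), (h1s m).
exists (mul (us m) (inv hh)), (mul hh (h2s m)); split => //.
  by have [_ HM _] := Hs_grp (ys m); apply: HM.
by rewrite eq (gA hg) (gKVr hg).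
Qed.

End Main.

End Aux.
Import Aux.

Theorem lemma4p1
  (R : realType)
  (X : topologicalType) (mulX : X -> X -> X) (invX : X -> X) (oneX : X)
  (delta : X -> X -> R)
  (a : X) (T Tinv : X -> X)
  (G : topologicalType) (mulG : G -> G -> G) (invG : G -> G) (oneG : G)
  (f : X -> G) (H : set G) (Hs : X -> set G) (U : set G) (z : X) :
  (* X: locally connected compact metrizable group, delta an invariant metric *)
  is_topgroup mulX invX oneX -> hausdorff_space X -> compact [set: X] ->
  locally_connected X ->
  is_metric delta -> metric_compatible delta -> invariant_metric mulX delta ->
  (* T: minimal rotation of X, Tinv its inverse *)
  (forall x, T x = mulX a x) -> cancel T Tinv -> cancel Tinv T ->
  minimal_map T ->
  (* G: locally compact second countable group *)
  is_topgroup mulG invG oneG -> hausdorff_space G -> locally_compact [set: G] ->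
  @second_countable G ->
  continuous f ->
  closed_subgroup mulG invG oneG H ->
  consistent_selection mulG invG oneG T Tinv f H Hs ->
  (* U: relatively compact open neighbourhood of 1_G *)
  open U -> U oneG -> compact (closure U) ->
  ess_range mulG invG oneG T Tinv f z
    `&` (setmul mulG (closure U) (Hs z) `\` setmul mulG U (Hs z)) = set0 ->
  (exists2 eps : R, 0 < eps &
     forall (y : X) (n : int), delta y z < eps -> delta (iterz T Tinv n y) z < eps ->
       setmul mulG [set cocycle mulG invG oneG T Tinv f n y] (Hs y)
         `&` setmul mulG U (Hs y) !=set0 \/
       setmul mulG [set cocycle mulG invG oneG T Tinv f n y] (Hs y)
         `&` setmul mulG (closure U) (Hs y) = set0)
  /\
  (forall (y : X) (g : G), ess_range mulG invG oneG T Tinv f y g ->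
     setmul mulG [set g] (Hs y) `<=` ess_range mulG invG oneG T Tinv f y).

Proof.
move=> htgX hX cX lcX hmet hcomp hinv Ta TK TKV hmin htg hG lcG scG cf hH hsel
  oU U1 cU hz.
have hgX := tg_group htgX.
have eT : T = (fun x => mulX a x) by apply: funext => x; rewrite Ta.
have eTi : Tinv = (fun x => mulX (invX a) x).
  apply: funext => x; rewrite -{2}(TKV x) Ta.
  by rewrite (gK hgX).
have cT : continuous T.
  rewrite eT; apply: (cont_mulf htgX (p:=fun=> a) (q:=id)); first exact: cst_continuous.
  by move=> x.
have cTi : continuous Tinv.
  rewrite eTi; apply: (cont_mulf htgX (p:=fun=> invX a) (q:=id)); first exact: cst_continuous.
  by move=> x.
split.
  exact: (part1 htg cT cTi cf TK TKV hH hsel hmet hcomp oU cU hz).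
move=> y g Eg.
exact: (part2 htg cT cTi cf TK TKV hH hsel Eg).
Qed.
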